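(* Let $G$ be a bipartite TRVG with respect to the torus, with a rectangle representation on the torus in which the rectangles of one part are $g_1,\dots,g_p$ and the rectangles of the other part are $r_1,\dots,r_q$. If, for each $i\in\{1,\dots,p\}$, $g_i$ sees exactly $\alpha_i$ of the rectangles $r_1,\dots,r_q$ horizontally, then \[ q\ \ge\ \alpha_1+\alpha_2+\cdots+\alpha_p-p. \]
   Context: View the torus as an axis-parallel rectangle $[0,W]\times[0,H]$ with opposite sides identified; horizontal lines $y=c$ and vertical lines $x=c$ are closed curves on it. A graph $G$ is a TRVG with respect to the torus if its vertices can be represented by a collection of pairwise non-overlapping axis-parallel rectangles on this torus (possibly wrapping across the identified sides), one per vertex, such that two distinct vertices are adjacent if and only if some horizontal or vertical line of the torus intersects the interiors of both of their rectangles (other rectangles do not block visibility). Two rectangles see each other horizontally if some horizontal line of the torus meets the interiors of both. *)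

(* Defs.v *)
From HB Require Import structures.
From mathcomp Require Import all_boot all_order all_algebra.
From mathcomp Require Import boolp reals.
Set Implicit Arguments. Unset Strict Implicit. Unset Printing Implicit Defensive.
Import Order.TTheory GRing.Theory Num.Theory.
Local Open Scope ring_scope.

(* The torus is [0,W] x [0,H] with opposite sides identified, i.e. (R/WZ) x (R/HZ).
   A rectangle on the torus is the image of [x, x+w] x [y, y+h] (0 < w < W, 0 < h < H),
   possibly wrapping across the identified sides. *)
Record trect (R : realType) := TRect { rx : R; ry : R; rw : R; rh : R }.

(* t (mod L) lies in the open arc (x, x+w) of the circle R/LZ. *)
Definition in_arc (R : realType) (L x w t : R) : Prop :=
  exists k : int, x < t + k%:~R * L < x + w.

Definition rect_ok (R : realType) (W H : R) (r : trect R) : Prop :=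
  (0 < rw r < W) /\ (0 < rh r < H).

(* some horizontal line y = c of the torus meets the interiors of both rectangles *)
Definition hsees (R : realType) (W H : R) (a b : trect R) : Prop :=
  exists c : R, in_arc H (ry a) (rh a) c /\ in_arc H (ry b) (rh b) c.

(* some vertical line x = c of the torus meets the interiors of both rectangles *)
Definition vsees (R : realType) (W H : R) (a b : trect R) : Prop :=
  exists c : R, in_arc W (rx a) (rw a) c /\ in_arc W (rx b) (rw b) c.

Definition sees (R : realType) (W H : R) (a b : trect R) : Prop :=
  hsees W H a b \/ vsees W H a b.

Definition overlap (R : realType) (W H : R) (a b : trect R) : Prop :=
  exists s t : R,
    in_arc W (rx a) (rw a) s /\ in_arc W (rx b) (rw b) s /\
    in_arc H (ry a) (rh a) t /\ in_arc H (ry b) (rh b) t.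

Definition TRVG_rep (R : realType) (W H : R) (T : finType) (e : rel T)
    (rect : T -> trect R) : Prop :=
  [/\ forall v, rect_ok W H (rect v),
      forall u v, u != v -> ~ overlap W H (rect u) (rect v)
    & forall u v, u != v -> (e u v <-> sees W H (rect u) (rect v))].

(* Main.v *)
Require Import Defs.
From HB Require Import structures.
From mathcomp Require Import all_boot all_order all_algebra.
From mathcomp Require Import boolp reals lra.
Set Implicit Arguments. Unset Strict Implicit.
Import Order.TTheory GRing.Theory Num.Theory.
Local Open Scope ring_scope.
Definition hopen (R : realType) (L y h t : R) : Prop :=
  exists k : int, y <= t + k%:~R * L < y + h.

Lemma F1 (R : realType) (L x w y h c : R) :
  in_arc L x w c -> in_arc L y h c -> hopen L y h x \/ in_arc L x w y.
Proof.
move=> [k /andP[k1 k2]] [m /andP[m1 m2]].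
have [le|lt] := lerP (c + k%:~R * L - x) (c + m%:~R * L - y).
  left; exists (m - k); rewrite intrB mulrBl; apply/andP; split; lra.
right; exists (k - m); rewrite intrB mulrBl; apply/andP; split; lra.
Qed.

Lemma F3 (R : realType) (L y1 h1 y2 h2 t : R) :
  hopen L y1 h1 t -> hopen L y2 h2 t ->
  exists c, in_arc L y1 h1 c /\ in_arc L y2 h2 c.
Proof.
move=> [k /andP[k1 k2]] [m /andP[m1 m2]].
set d1 := y1 + h1 - (t + k%:~R * L).
set d2 := y2 + h2 - (t + m%:~R * L).
have [le|lt] := lerP d1 d2.
  exists (t + d1 / 2); split; [exists k|exists m]; apply/andP; split;
  rewrite /d1 /d2 in le *; lra.
exists (t + d2 / 2); split; [exists k|exists m]; apply/andP; split;
rewrite /d1 /d2 in lt *; lra.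
Qed.

Unset Implicit Arguments.

Theorem lemma3 (R : realType) (W H : R) (T : finType) (e : rel T)
    (rect : T -> trect R) (A : {set T}) :
  0 < W -> 0 < H ->
  symmetric e -> irreflexive e ->
  TRVG_rep W H e rect ->
  (forall u v, e u v -> (u \in A) != (v \in A)) ->
  (\sum_(i in A) #|[set j in ~: A | `[< hsees W H (rect i) (rect j) >]]|
     <= #|~: A| + #|A|)%N.
Proof.
move=> _ _ _ _ [_ _ Hsee] Hbip.
have nohs : forall u v, u != v -> (u \in A) = (v \in A) ->
    ~ hsees W H (rect u) (rect v).
  move=> u v uv Auv hs.
  have /Hbip : e u v by apply/(Hsee u v uv); left.
  by rewrite Auv eqxx.
pose P i := [set j in ~: A | `[< hopen H (ry (rect j)) (rh (rect j)) (ry (rect i)) >]].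
pose Q i := [set j in ~: A | `[< in_arc H (ry (rect i)) (rh (rect i)) (ry (rect j)) >]].
have S1 : forall i, (#|[set j in ~: A | `[< hsees W H (rect i) (rect j) >]]|
                    <= #|P i| + #|Q i|)%N.
  move=> i; apply: leq_trans (leq_card_setU _ _); apply: subset_leq_card.
  apply/subsetP => j; rewrite /P /Q !inE => /andP[jB /asboolP [c [c1 c2]]].
  rewrite jB /=; case: (F1 c1 c2) => h.
    by apply/orP; left; apply/asboolP.
  by apply/orP; right; apply/asboolP.
have P1 : forall i, (#|P i| <= 1)%N.
  move=> i; apply/card_le1_eqP => j j'; rewrite /P !inE.
  move=> /andP[jB /asboolP hj] /andP[j'B /asboolP hj'].
  case: (eqVneq j j') => // jj'; exfalso.
  apply: (nohs j j' jj'); first by move: jB j'B => /negbTE-> /negbTE->.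
  exact: F3 hj hj'.
have Q1 : forall j, j \in ~: A -> (\sum_(i in A) (j \in Q i) <= 1)%N.
  move=> j jB.
  have -> : (\sum_(i in A) (j \in Q i) = \sum_(i | (i \in A) && (j \in Q i)) 1)%N.
    by rewrite big_mkcondr /=; apply: eq_bigr => i _; case: (j \in Q i).
  rewrite sum1dep_card; apply/card_le1_eqP => i i'; rewrite /Q !inE.
  move=> /andP[iA /andP[_ /asboolP hi]] /andP[i'A /andP[_ /asboolP hi']].
  case: (eqVneq i i') => // ii'; exfalso.
  apply: (nohs i i' ii'); first by rewrite iA i'A.
  by exists (ry (rect j)); split.
apply: (@leq_trans (\sum_(i in A) (#|P i| + #|Q i|))); first by apply: leq_sum => i _; exact: S1.
rewrite big_split /= addnC leq_add //; last first.
  by rewrite -[X in (_ <= X)%N]sum1_card; apply: leq_sum => i _; exact: P1.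
have E : forall i, #|Q i| = (\sum_(j in ~: A) (j \in Q i))%N.
  move=> i; rewrite -sum1_card.
  rewrite (eq_bigl (fun j => (j \in ~: A) && (j \in Q i))); last first.
    by move=> j; rewrite /Q !inE; case: (j \in A).
  rewrite big_mkcondr /=; apply: eq_bigr => j _; by case: (j \in Q i).
rewrite (eq_bigr _ (fun i _ => E i)) exchange_big /=.
by rewrite -[X in (_ <= X)%N]sum1_card; apply: leq_sum => j jB; exact: Q1.
Qed.
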